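(* Let $d\ge2$ and $A\in\mathbb{N}$. Let $\{(G_\nu,S_\nu,|\cdot|_\nu)\}_{\nu\in\mathbb{N}}$ be a non-$\ell_1$-expanding similar family of groups of automorphisms of $T_d$ such that $S_\nu\subseteq\mathcal{I}_\infty^\nu$ and $|S_\nu|\le A$ for every $\nu\in\mathbb{N}$, and let $\Omega_\nu(n)$ be the sphere of radius $n$ in $G_\nu$ with respect to the pseudometric induced by $|\cdot|_\nu$. If there exists a subexponential function $\delta\colon\mathbb{N}\to\mathbb{N}$ with $\ln(\delta)$ concave such that for infinitely many $\nu\in\mathbb{N}$ one has $|\mathcal{I}_\infty^\nu\cap\Omega_\nu(n)|\le\delta(n)$ for all $n\in\mathbb{N}$, then $G_\nu$ is of subexponential growth for every $\nu\in\mathbb{N}$.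
   Context: $T_d$ is the $d$-regular rooted tree (vertices: finite words over $\{1,\dots,d\}$). $\mathrm{Sym}(d)$ acts by rooted automorphisms $\tau(xw)=\tau(x)w$, and every $g\in\mathrm{Aut}(T_d)$ is uniquely written $g=(g_1,\dots,g_d)\tau$ with $\tau\in\mathrm{Sym}(d)$ and $g_i$ the restriction of $g\tau^{-1}$ to the subtree at vertex $i$. A pseudolength on a finite symmetric generating set $S$ of $G$ is a map $S\to\{0,1\}$; the associated word pseudonorm is $|g|=\min\{\sum_i|s_i| : g=s_1\cdots s_k, s_i\in S\}$, with pseudometric $d(g,h)=|g^{-1}h|$; it is proper if the subgroup generated by length-$0$ generators is finite. A non-$\ell_1$-expanding similar family is a family $\{(G_\nu,S_\nu,|\cdot|_\nu)\}_{\nu\in\mathbb{N}}$ where each $G_\nu\le\mathrm{Aut}(T_d)$ acts transitively on each level of $T_d$, is generated by the finite symmetric set $S_\nu$ and carries a proper word pseudonorm $|\cdot|_\nu$, such that every $g\in G_\nu$ is $g=(g_1,\dots,g_d)\tau$ with $g_i\in G_{\nu+1}$, $\tau\in\mathrm{Sym}(d)$ and $\sum_{i=1}^d|g_i|_{\nu+1}\le|g|_\nu$. Incompressible elements: $\mathcal{I}_0^\nu=G_\nu$; $\mathcal{I}_k^\nu=\{g=(g_1,\dots,g_d)\tau\in G_\nu : g_i\in\mathcal{I}_{k-1}^{\nu+1}, \sum_i|g_i|_{\nu+1}=|g|_\nu\}$; $\mathcal{I}_\infty^\nu=\bigcap_{k\ge1}\mathcal{I}_k^\nu$. For non-decreasing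 $f,g\colon\mathbb{N}\to\mathbb{N}$, $f\lesssim g$ means $f(n)\le g(Cn)$ for some $C\in\mathbb{N}_{>0}$ and all $n\ge1$, $f\sim g$ means both directions; $f$ is subexponential if $f\lesssim e^n$ and $f\not\sim e^n$; a group is of subexponential growth if its growth function (ball sizes) is subexponential. *)

(* Defs.v *)
From Stdlib Require List.
From Stdlib Require Import Reals ClassicalEpsilon.
From mathcomp Require Import all_boot.

Set Implicit Arguments.
Unset Strict Implicit.
Unset Printing Implicit Defensive.

(* Vertices of T_d: finite words over the alphabet 'I_d = {0,...,d-1}. *)
Definition vert (d : nat) := seq 'I_d.
Definition tfun (d : nat) := vert d -> vert d.

(* g is a rooted automorphism of T_d: a bijection of the vertices that
   preserves the level (word length) and the prefix (ancestor) relation. *)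
Definition is_aut (d : nat) (g : tfun d) : Prop :=
  bijective g /\
  (forall w, size (g w) = size w) /\
  (forall v w, exists u, g (v ++ w) = g v ++ u).

(* Writing g = (g_1,...,g_d) tau, the family
   (section g x)_x is a re-indexing of (g_i)_i by the permutation tau. *)
Definition section (d : nat) (g : tfun d) (x : 'I_d) : tfun d :=
  fun w => behead (g (x :: w)).

Definition prod_word (d : nat) (w : seq (tfun d)) : tfun d :=
  foldr (fun s acc => s \o acc) id w.

Definition word_over (d : nat) (S : seq (tfun d)) (w : seq (tfun d)) : Prop :=
  List.Forall (fun s => List.In s S) w.

Definition in_gen (d : nat) (S : seq (tfun d)) (g : tfun d) : Prop :=
  exists w, word_over S w /\ prod_word w = g.

Definition weight (d : nat) (l : tfun d -> nat) (w : seq (tfun d)) : nat :=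
  sumn (map l w).

Definition word_weight (d : nat) (S : seq (tfun d)) (l : tfun d -> nat)
  (g : tfun d) (m : nat) : Prop :=
  exists w, word_over S w /\ prod_word w = g /\ weight l w = m.

Definition wnorm (d : nat) (S : seq (tfun d)) (l : tfun d -> nat)
  (g : tfun d) : nat :=
  epsilon (inhabits 0%nat)
    (fun n => word_weight S l g n /\
              (forall m, word_weight S l g m -> (n <= m)%N)).

Definition has_card (T : Type) (P : T -> Prop) (n : nat) : Prop :=
  exists l : list T, List.NoDup l /\ length l = n /\
                     (forall x, List.In x l <-> P x).

Definition finite_pred (T : Type) (P : T -> Prop) : Prop :=
  exists l : list T, forall x, P x -> List.In x l.

Definition card_le (T : Type) (P : T -> Prop) (n : nat) : Prop :=
  exists l : list T, (length l <= n)%N /\ (forall x, P x -> List.In x l).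

(* The data: S nu is the finite symmetric generating set of G_nu := <S nu>,
   l nu is the pseudolength on S nu. *)

Definition inG (d : nat) (S : nat -> seq (tfun d)) (nu : nat) (g : tfun d) :=
  in_gen (S nu) g.

Definition norm (d : nat) (S : nat -> seq (tfun d)) (l : nat -> tfun d -> nat)
  (nu : nat) (g : tfun d) : nat := wnorm (S nu) (l nu) g.

Definition non_l1_expanding_similar_family (d : nat)
  (S : nat -> seq (tfun d)) (l : nat -> tfun d -> nat) : Prop :=
  forall nu : nat,
    (forall s, List.In s (S nu) -> is_aut s) /\
    (forall s, List.In s (S nu) ->
       exists t, List.In t (S nu) /\ (forall w, t (s w) = w)) /\
    (forall v w : vert d, size v = size w ->
       exists g, inG S nu g /\ g v = w) /\
    (forall s, List.In s (S nu) -> (l nu s <= 1)%N) /\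
    (* the word pseudonorm is proper *)
    finite_pred (in_gen [seq s <- S nu | l nu s == 0%N]) /\
    (forall g, inG S nu g ->
       (forall x, inG S nu.+1 (section g x)) /\
       (\sum_(x < d) norm S l nu.+1 (section g x) <= norm S l nu g)%N).

Fixpoint incomp (d : nat) (S : nat -> seq (tfun d)) (l : nat -> tfun d -> nat)
  (k nu : nat) (g : tfun d) {struct k} : Prop :=
  match k with
  | 0 => inG S nu g
  | k'.+1 => inG S nu g /\
             (forall x, incomp S l k' nu.+1 (section g x)) /\
             (\sum_(x < d) norm S l nu.+1 (section g x))%N = norm S l nu g
  end.

Definition incomp_inf (d : nat) (S : nat -> seq (tfun d))
  (l : nat -> tfun d -> nat) (nu : nat) (g : tfun d) : Prop :=
  forall k, (1 <= k)%N -> incomp S l k nu g.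

Definition sphere (d : nat) (S : nat -> seq (tfun d))
  (l : nat -> tfun d -> nat) (nu n : nat) (g : tfun d) : Prop :=
  inG S nu g /\ norm S l nu g = n.

Definition nondecreasing (f : nat -> nat) : Prop :=
  forall m n, (m <= n)%N -> (f m <= f n)%N.

Definition lesssim (f g : nat -> R) : Prop :=
  exists C : nat, (0 < C)%N /\ forall n : nat, (1 <= n)%N -> Rle (f n) (g (C * n)%N).

Definition expn_R : nat -> R := fun n => exp (INR n).

(* Subexponential: f non-decreasing, f <~ e^n and not f ~ e^n
   (given f <~ e^n, f ~ e^n amounts to e^n <~ f). *)
Definition subexponential (f : nat -> nat) : Prop :=
  nondecreasing f /\
  lesssim (fun n => INR (f n)) expn_R /\
  ~ (lesssim (fun n => INR (f n)) expn_R /\ lesssim expn_R (fun n => INR (f n))).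

Definition word_ball (d : nat) (S : seq (tfun d)) (n : nat) (g : tfun d) : Prop :=
  exists w, word_over S w /\ (size w <= n)%N /\ prod_word w = g.

Definition subexponential_growth (d : nat) (S : seq (tfun d)) : Prop :=
  exists f : nat -> nat,
    (forall n, has_card (word_ball S n) (f n)) /\ subexponential f.

(* ln(delta) is concave on N (delta positive so that ln delta is defined). *)
Definition ln_concave (delta : nat -> nat) : Prop :=
  (forall n, (0 < delta n)%N) /\
  forall n : nat,
    Rle (Rplus (ln (INR (delta n))) (ln (INR (delta n.+2)))) (Rmult 2 (ln (INR (delta n.+1)))).

(* Main.v *)
Require Import Defs.
From Stdlib Require List.
From Stdlib Require Import Reals Lra ClassicalEpsilon FunctionalExtensionality Classical.
From mathcomp Require Import all_boot zify.
From Stdlib Require Import Lia.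

Set Implicit Arguments.
Unset Strict Implicit.
Unset Printing Implicit Defensive.

Section RealLemmas.
Local Open Scope R_scope.

Lemma INR_muln m n : INR (m * n)%N = INR m * INR n.
Proof. by rewrite -mult_INR. Qed.
Lemma INR_addn m n : INR (m + n)%N = INR m + INR n.
Proof. by rewrite -plus_INR. Qed.
Lemma INR_expn m n : INR (m ^ n)%N = INR m ^ n.
Proof. rewrite -pow_INR; congr INR; elim: n => //= n IH; by rewrite expnS IH. Qed.
Lemma INR_leq m n : (m <= n)%N -> INR m <= INR n.
Proof. move=> H; apply: le_INR; apply/leP. exact: H. Qed.
Lemma INR_subn m n : (n <= m)%N -> INR (m - n)%N = INR m - INR n.
Proof. move=> H; rewrite minus_INR //; apply/leP; exact: H. Qed.

Lemma exp_le x y : x <= y -> exp x <= exp y.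
Proof. case/Rle_lt_or_eq_dec => H; [left; exact: exp_increasing|by rewrite H; right]. Qed.

Lemma exp_ge1 x : 0 <= x -> 1 <= exp x.
Proof. move=> H; rewrite -exp_0; exact: exp_le. Qed.

Lemma exp_pow a k : exp a ^ k = exp (a * INR k).
Proof.
elim: k => [|k IH]; first by rewrite /= Rmult_0_r exp_0.
change (exp a * exp a ^ k = exp (a * INR k.+1)).
rewrite IH -exp_plus S_INR; congr exp; ring.
Qed.

Lemma lin_exp a n : 0 < a -> INR n + 1 <= / Rmin 1 a * exp (a * INR n).
Proof.
move=> Ha.
have Hm : 0 < Rmin 1 a by apply: Rmin_glb_lt; lra.
have H1 := exp_ineq1_le (a * INR n).
have Hn := pos_INR n.
apply: (Rmult_le_reg_l (Rmin 1 a)) => //.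
rewrite -Rmult_assoc Rinv_r; last lra.
rewrite Rmult_1_l.
apply: Rle_trans H1.
have := Rmin_l 1 a; have := Rmin_r 1 a => H2 H3.
nra.
Qed.

Lemma poly_exp a D n : 0 < a -> (INR n + 1) ^ D <= (/ Rmin 1 a) ^ D * exp (a * INR D * INR n).
Proof.
move=> Ha; have Hm : 0 < Rmin 1 a by apply: Rmin_glb_lt; lra.
have -> : a * INR D * INR n = (a * INR n) * INR D by ring.
rewrite -exp_pow -Rpow_mult_distr; apply: pow_incr; split.
  have := pos_INR n; lra.
exact: lin_exp.
Qed.

End RealLemmas.

Section Main.
Variables (d : nat) (S : nat -> seq (tfun d)) (l : nat -> tfun d -> nat).
Hypothesis Hfam : non_l1_expanding_similar_family S l.
Hypothesis Hd : (0 < d)%N.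

Definition G nu g := inG S nu g.
Definition nrm nu g := norm S l nu g.
Definition ball nu n (g : tfun d) :=
  exists w, word_over (S nu) w /\ prod_word w = g /\ (weight (l nu) w <= n)%N.

Lemma prod_word_cat (u v : seq (tfun d)) :
  prod_word (u ++ v) = prod_word u \o prod_word v.
Proof. by elim: u => //= s u ->. Qed.

Lemma word_over_cat (T : seq (tfun d)) u v :
  word_over T u -> word_over T v -> word_over T (u ++ v).
Proof. move=> Hu Hv; exact: (proj2 (List.Forall_app _ u v) (conj Hu Hv)). Qed.

Lemma word_over_cat_inv (T : seq (tfun d)) u v :
  word_over T (u ++ v) -> word_over T u /\ word_over T v.
Proof. move=> H; exact: (proj1 (List.Forall_app _ u v) H). Qed.

Lemma weight_cat (f : tfun d -> nat) u v : weight f (u ++ v) = weight f u + weight f v.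
Proof. by rewrite /weight map_cat sumn_cat. Qed.

Lemma min_exists (P : nat -> Prop) m0 : P m0 -> exists n, P n /\ forall m, P m -> (n <= m)%N.
Proof.
elim: m0 {-2}m0 (leqnn m0) => [|k IH] m0 Hm0 Pm0.
  exists m0; split => // m _; move: Hm0; rewrite leqn0 => /eqP ->; done.
case: (classic (exists m, P m /\ (m < m0)%N)) => [[m [Pm Hm]]|Hn].
  apply: (IH m) => //; rewrite -ltnS; exact: leq_trans Hm Hm0.
exists m0; split => // m Pm; rewrite leqNgt; apply/negP => Hlt; apply: Hn; by exists m.
Qed.

Lemma norm_spec nu g : G nu g ->
  word_weight (S nu) (l nu) g (nrm nu g) /\
  forall m, word_weight (S nu) (l nu) g m -> (nrm nu g <= m)%N.
Proof.
move=> [w [Hw Hg]].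
have [n Hn] := @min_exists (word_weight (S nu) (l nu) g) (weight (l nu) w)
  (ex_intro _ w (conj Hw (conj Hg erefl))).
exact: (epsilon_spec (inhabits 0%N) (fun n => word_weight (S nu) (l nu) g n /\
              (forall m, word_weight (S nu) (l nu) g m -> (n <= m)%N)) (ex_intro _ n Hn)).
Qed.

Lemma norm_le_weight nu w : word_over (S nu) w -> (nrm nu (prod_word w) <= weight (l nu) w)%N.
Proof.
move=> Hw; have HG : G nu (prod_word w) by exists w.
apply: (proj2 (norm_spec HG)); by exists w.
Qed.

Lemma ball_iff nu n g : ball nu n g <-> G nu g /\ (nrm nu g <= n)%N.
Proof.
split.
  move=> [w [Hw [<- Hn]]]; split; first by exists w.
  exact: leq_trans (norm_le_weight Hw) Hn.
move=> [HG Hn]; have [[w [Hw [Hg Hwt]]] _] := norm_spec HG.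
exists w; split => //; split => //; by rewrite Hwt.
Qed.

Lemma G_comp nu a b : G nu a -> G nu b -> G nu (a \o b).
Proof.
move=> [u [Hu <-]] [v [Hv <-]]; exists (u ++ v); split; first exact: word_over_cat.
by rewrite prod_word_cat.
Qed.

Lemma G_id nu : G nu id.
Proof. by exists [::]; split => //; constructor. Qed.

Lemma norm_sub nu a b : G nu a -> G nu b -> (nrm nu (a \o b) <= nrm nu a + nrm nu b)%N.
Proof.
move=> Ha Hb.
have [[u [Hu [Hua Hwu]]] _] := norm_spec Ha.
have [[v [Hv [Hvb Hwv]]] _] := norm_spec Hb.
have := norm_le_weight (word_over_cat Hu Hv).
by rewrite prod_word_cat Hua Hvb weight_cat Hwu Hwv.
Qed.

Definition waut (g : tfun d) :=
  injective g /\ (forall w, size (g w) = size w) /\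
  (forall v w, exists u, g (v ++ w) = g v ++ u).

Lemma aut_waut g : is_aut g -> waut g.
Proof. move=> [Hb [Hs Hp]]; split => //; exact: bij_inj. Qed.

Lemma waut_id : waut id.
Proof. split => //; split => // v w; by exists w. Qed.

Lemma waut_comp a b : waut a -> waut b -> waut (a \o b).
Proof.
move=> [Ia [Sa Pa]] [Ib [Sb Pb]]; split; first exact: inj_comp.
split => [w|v w] /=; first by rewrite Sa Sb.
have [u Hu] := Pb v w; rewrite Hu; have [u' Hu'] := Pa (b v) u; by exists u'.
Qed.

Lemma G_waut nu g : G nu g -> waut g.
Proof.
move=> [w [Hw <-]]; elim: w Hw => [|s w IH] Hw /=; first exact: waut_id.
inversion Hw; subst; apply: waut_comp; last exact: IH.
apply: aut_waut; exact: (proj1 (Hfam nu)).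
Qed.

Lemma waut_cons g x u : waut g ->
  g (x :: u) = head x (g [:: x]) :: section g x u.
Proof.
move=> [_ [Sg Pg]]; have [u' Hu'] := Pg [:: x] u.
move: (Sg [:: x]); case E: (g [:: x]) => [|y [|z r]] //= _.
rewrite /section /=; move: Hu'; rewrite /= E /= => ->; done.
Qed.

Lemma waut_section g x : waut g -> waut (section g x).
Proof.
move=> Hg; have Hc := waut_cons x ^~ Hg.
move: Hg => [Ig [Sg Pg]]; split.
  move=> u u' E; have := Hc u; rewrite E -Hc => /Ig; by case.
split => [w|v w]; first by rewrite /section size_behead Sg.
rewrite /section; have [u Hu] := Pg (x :: v) w; exists u.
rewrite -cat_cons Hu Hc; done.
Qed.

Lemma section_comp a b x : waut b ->
  section (a \o b) x = section a (head x (b [:: x])) \o section b x.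
Proof.
move=> Hb; apply: functional_extensionality => u; by rewrite /section /= (waut_cons _ _ Hb).
Qed.

Fixpoint sec (g : tfun d) (w : vert d) : tfun d :=
  match w with [::] => g | x :: w' => sec (section g x) w' end.

Lemma waut_sec g w : waut g -> waut (sec g w).
Proof. elim: w g => [|x w IH] g Hg //=; apply: IH; exact: waut_section. Qed.

Lemma sec_comp a b w : waut a -> waut b -> sec (a \o b) w = sec a (b w) \o sec b w.
Proof.
elim: w a b => [|x w IH] a b Ha Hb.
  move: Hb => [_ [Sb _]]; move: (Sb [::]) => /=; by case: (b [::]).
change (sec (section (a \o b) x) w = sec a (b (x :: w)) \o sec (section b x) w).
rewrite section_comp // IH; [|exact: waut_section|exact: waut_section].
by rewrite [b (x :: w)](waut_cons _ _ Hb).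
Qed.

Lemma sec_cat g w u : waut g -> g (w ++ u) = g w ++ sec g w u.
Proof.
elim: w g => [|x w IH] g Hg /=.
  move: (Hg) => [_ [Sg _]]; move: (Sg [::]) => /=; by case: (g [::]).
rewrite [g (x :: _ ++ _)](waut_cons _ _ Hg) [g (x :: w)](waut_cons _ _ Hg) IH //; exact: waut_section.
Qed.

Lemma G_section nu g x : G nu g -> G nu.+1 (section g x).
Proof. move=> Hg; exact: ((proj2 (proj2 (proj2 (proj2 (proj2 (Hfam nu)))))) g Hg).1. Qed.

Lemma G_sec nu g w : G nu g -> G (nu + size w) (sec g w).
Proof.
elim: w nu g => [|x w IH] nu g Hg /=; first by rewrite addn0.
rewrite -addSnnS; apply: IH; exact: G_section.
Qed.

Lemma fam_le nu g : G nu g -> (\sum_(x < d) nrm nu.+1 (section g x) <= nrm nu g)%N.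
Proof. move=> Hg; exact: ((proj2 (proj2 (proj2 (proj2 (proj2 (Hfam nu)))))) g Hg).2. Qed.

Fixpoint levelw (L : nat) : seq (vert d) :=
  if L is L'.+1 then [seq x :: w | x <- enum 'I_d, w <- levelw L']
  else [:: [::]].

Lemma mem_levelw L w : (w \in levelw L) = (size w == L).
Proof.
elim: L w => [|L IH] [|x w]; rewrite ?in_cons ?in_nil ?orbF //=.
  apply/negP => /flattenP; case => s /mapP [y _ ->] /mapP [v _]; done.
apply/flattenP/idP.
  case => s /mapP [y _ ->] /mapP [v Hv [_ ->]]; by rewrite eqSS -IH.
move=> Hs; exists [seq x :: w0 | w0 <- levelw L]; first by apply/mapP; exists x => //; rewrite mem_enum.
by apply/mapP; exists w => //; rewrite IH.
Qed.

Lemma uniq_levelw L : uniq (levelw L).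
Proof.
elim: L => [|L IH] //=.
apply: (allpairs_uniq (f := fun x w => x :: w)) => //; first exact: enum_uniq.
by move=> [x1 w1] [x2 w2] _ _ /= [-> ->].
Qed.

Definition T L nu g := sumn [seq nrm (nu + L) (sec g w) | w <- levelw L].

Lemma T0 nu g : T 0 nu g = nrm nu g.
Proof. by rewrite /T /= addn0 addn0. Qed.

Lemma sumn_allpairs (s : seq 'I_d) (t : seq (vert d)) (f : vert d -> nat) :
  sumn (map f [seq x :: y | x <- s, y <- t]) = sumn [seq sumn [seq f (x :: y) | y <- t] | x <- s].
Proof. by elim: s => //= x s IH; rewrite map_cat sumn_cat IH -map_comp. Qed.

Lemma TS L nu g : T L.+1 nu g = (\sum_(x < d) T L nu.+1 (section g x))%N.
Proof.
rewrite /T /= sumn_allpairs.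
rewrite sumnE big_map big_enum /=; apply: eq_bigr => x _.
by rewrite addSnnS.
Qed.

Lemma T_le L nu g : G nu g -> (T L nu g <= nrm nu g)%N.
Proof.
elim: L nu g => [|L IH] nu g Hg; first by rewrite T0.
rewrite TS; apply: leq_trans (fam_le Hg).
apply: leq_sum => x _; apply: IH; exact: G_section.
Qed.

Lemma sum_eq_le_pointwise (a c : 'I_d -> nat) :
  (forall x, a x <= c x)%N -> (\sum_(x < d) c x <= \sum_(x < d) a x)%N ->
  forall x, a x = c x.
Proof.
move=> Hle Hs.
have E : (\sum_(x < d) c x = \sum_(x < d) (c x - a x) + \sum_(x < d) a x)%N.
  by rewrite -big_split /=; apply: eq_bigr => x _; rewrite subnK.
have : (\sum_(x < d) (c x - a x) == 0)%N.
  by rewrite -(eqn_add2r (\sum_(x < d) a x)) add0n -E eqn_leq Hs leq_sum.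
rewrite sum_nat_eq0 => /forallP H x; move: (H x) => /= /eqP.
move/eqP; rewrite subn_eq0 => H2; apply/eqP; by rewrite eqn_leq Hle H2.
Qed.

Lemma T_eq_incomp L nu g : G nu g -> T L nu g = nrm nu g -> incomp S l L nu g.
Proof.
elim: L nu g => [|L IH] nu g Hg HT //=.
have Hs := fam_le Hg.
move: HT; rewrite TS => HT.
have Hp : forall x, T L nu.+1 (section g x) = nrm nu.+1 (section g x).
  apply: sum_eq_le_pointwise; first by move=> x; apply: T_le; exact: G_section.
  by rewrite HT.
split => //; split.
  move=> x; apply: IH; [exact: G_section|exact: Hp].
change (\sum_(x < d) nrm nu.+1 (section g x) = nrm nu g)%N.
rewrite -HT; apply: eq_bigr => x _; by rewrite Hp.
Qed.

Lemma incomp_G k nu g : incomp S l k nu g -> G nu g.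
Proof. by case: k => [|k] //= [H _]. Qed.

Lemma incomp_mono k nu g : incomp S l k.+1 nu g -> incomp S l k nu g.
Proof.
elim: k nu g => [|k IH] nu g /=; first by case.
move=> [Hg [Hx He]]; split => //; split => // x; exact: IH.
Qed.

Lemma incomp_mono_le k L nu g : (k <= L)%N -> incomp S l L nu g -> incomp S l k nu g.
Proof.
move=> /subnK <-; elim: (L - k)%N => [|j IH] //= H; apply: IH; exact: incomp_mono.
Qed.

Lemma not_incomp_T L nu g : G nu g -> ~ incomp S l L nu g -> (T L nu g < nrm nu g)%N.
Proof.
move=> Hg Hn; rewrite ltn_neqAle T_le // andbT; apply/eqP => E; apply: Hn; exact: T_eq_incomp.
Qed.

Lemma norm0_incomp nu g : G nu g -> nrm nu g = 0%N -> incomp_inf S l nu g.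
Proof.
move=> Hg H0 k _; apply: T_eq_incomp => //; apply/eqP; by rewrite H0 -leqn0 -H0 T_le.
Qed.

Lemma sumn_map_le (A : eqType) (s : seq A) (f g : A -> nat) :
  (forall x, x \in s -> f x <= g x)%N -> (sumn (map f s) <= sumn (map g s))%N.
Proof.
elim: s => //= x s IH H; apply: leq_add; first by apply: H; rewrite mem_head.
apply: IH => y Hy; apply: H; by rewrite in_cons Hy orbT.
Qed.

Lemma sumn_mapD (A : Type) (s : seq A) (f g : A -> nat) :
  sumn [seq f x + g x | x <- s] = (sumn (map f s) + sumn (map g s))%N.
Proof. elim: s => //= x s ->; by rewrite addnACA. Qed.

Lemma perm_levelw L b : waut b -> perm_eq [seq b w | w <- levelw L] (levelw L).
Proof.
move=> [Ib [Sb _]].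
have U1 : uniq [seq b w | w <- levelw L] by rewrite map_inj_uniq // uniq_levelw.
apply: uniq_perm => //; first exact: uniq_levelw.
have Hsub : {subset [seq b w | w <- levelw L] <= levelw L}.
  move=> v /mapP [w Hw ->]; by rewrite mem_levelw Sb -mem_levelw.
by case: (uniq_min_size U1 Hsub (eq_leq (esym (size_map _ _)))).
Qed.

Lemma T_sub L nu a b : G nu a -> G nu b -> (T L nu (a \o b) <= T L nu a + T L nu b)%N.
Proof.
move=> Ha Hb; have Wa := G_waut Ha; have Wb := G_waut Hb.
rewrite /T.
have E1 : sumn [seq nrm (nu + L) (sec a w) | w <- levelw L] =
          sumn [seq nrm (nu + L) (sec a (b w)) | w <- levelw L].
  rewrite (map_comp (fun w => nrm (nu + L) (sec a w)) b).
  apply: perm_sumn; apply: perm_map; rewrite perm_sym; exact: perm_levelw.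
rewrite E1 -sumn_mapD; apply: sumn_map_le => w Hw.
rewrite sec_comp //.
have Hsw : size w = L by apply/eqP; rewrite -mem_levelw.
apply: norm_sub.
  have := G_sec (b w) Ha; by move: Wb => [_ [-> _]]; rewrite Hsw.
have := G_sec w Hb; by rewrite Hsw.
Qed.

Lemma nrm_id nu : nrm nu id = 0%N.
Proof.
apply/eqP; rewrite -leqn0; have := @norm_le_weight nu [::]; apply; constructor.
Qed.

Lemma sec_id w : sec id w = id.
Proof. by elim: w => //= x w IH; rewrite -{2}IH. Qed.

Lemma T_id L nu : T L nu id = 0%N.
Proof.
rewrite /T; elim: (levelw L) => //= w s ->; by rewrite sec_id nrm_id.
Qed.

Lemma T_prod L nu (bs : seq (tfun d)) : List.Forall (G nu) bs ->
  (T L nu (prod_word bs) <= sumn (map (T L nu) bs))%N.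
Proof.
elim: bs => [|b bs IH] H /=; first by rewrite T_id.
inversion H; subst.
have HG : G nu (prod_word bs).
  clear -H3; elim: bs H3 => [|c cs IHc] Hc /=; first exact: G_id.
  inversion Hc; subst; apply: G_comp => //; exact: IHc.
apply: leq_trans (T_sub L H2 HG) _; rewrite leq_add2l; exact: IH.
Qed.

Lemma portrait_inj L g g' : waut g -> waut g' ->
  (forall w, w \in levelw L -> g w = g' w /\ sec g w = sec g' w) -> g = g'.
Proof.
move=> Wg Wg' H; apply: functional_extensionality => v.
case: (leqP L (size v)) => Hv.
  rewrite -(cat_take_drop L v) !sec_cat //.
  have Hw : take L v \in levelw L by rewrite mem_levelw size_take_min minnC; apply/eqP/minn_idPr.
  by case: (H _ Hw) => -> ->.
pose x0 : 'I_d := Ordinal Hd.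
pose z := nseq (L - size v) x0.
have Hw : v ++ z \in levelw L by rewrite mem_levelw size_cat size_nseq subnKC // ltnW.
have [E1 _] := H _ Hw.
move: (Wg) (Wg') E1 => [_ [Sg _]] [_ [Sg' _]].
rewrite !sec_cat // => E1.
by rewrite -(take_size_cat (sec g v z) (Sg v)) E1 take_size_cat.
Qed.

Lemma In_mem (A : eqType) (x : A) s : x \in s -> List.In x s.
Proof. elim: s => //= y s IH; rewrite in_cons => /orP [/eqP ->|H]; [by left|right; exact: IH]. Qed.

Lemma In_map (A B : Type) (f : A -> B) x s : List.In x s -> List.In (f x) (map f s).
Proof. elim: s => //= y s IH [->|H]; [by left|right; exact: IH]. Qed.

Lemma In_flatten (A : Type) (x : A) s ss : List.In s ss -> List.In x s -> List.In x (flatten ss).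
Proof.
elim: ss => //= s' ss IH [->|H] Hx; apply/List.in_or_app; [left => //|right; exact: IH].
Qed.

Lemma In_allpairs (A B C : Type) (f : A -> B -> C) x y s t :
  List.In x s -> List.In y t -> List.In (f x y) [seq f a b | a <- s, b <- t].
Proof. move=> Hx Hy; apply: In_flatten (In_map _ Hx) _; exact: In_map. Qed.

Fixpoint allseqs (A : Type) (s : seq A) (n : nat) : seq (seq A) :=
  if n is n'.+1 then [seq x :: r | x <- s, r <- allseqs s n'] else [:: [::]].

Lemma size_allseqs (A : Type) (s : seq A) n : size (allseqs s n) = (size s ^ n)%N.
Proof. elim: n => //= n IH; by rewrite size_allpairs IH expnS. Qed.

Lemma In_allseqs (A : Type) (s r : seq A) :
  (forall x, List.In x r -> List.In x s) -> List.In r (allseqs s (size r)).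
Proof.
elim: r => [|x r IH] H /=; first by left.
apply: (In_allpairs (fun a b => a :: b)); first by apply: H; left.
apply: IH => y Hy; apply: H; by right.
Qed.

Fixpoint tup (Ls : nat -> seq (tfun d)) (n t : nat) : seq (seq (tfun d)) :=
  if n is n'.+1 then
    flatten [seq [seq x :: r | x <- Ls s, r <- tup Ls n' (t - s)] | s <- iota 0 t.+1]
  else [:: [::]].

Lemma size_tup Ls n t : size (tup Ls n.+1 t) =
  sumn [seq (size (Ls s) * size (tup Ls n (t - s)))%N | s <- iota 0 t.+1].
Proof.
have -> : tup Ls n.+1 t =
  flatten [seq [seq x :: r | x <- Ls s, r <- tup Ls n (t - s)] | s <- iota 0 t.+1] by [].
rewrite size_flatten /shape -map_comp; congr sumn; apply: eq_map => s /=; by rewrite size_allpairs.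
Qed.

Lemma In_tup nu' Ls : (forall s h, ball nu' s h -> List.In h (Ls s)) ->
  forall r t, List.Forall (G nu') r -> (sumn (map (nrm nu') r) <= t)%N ->
  List.In r (tup Ls (size r) t).
Proof.
move=> HL; elim => [|h r IH] t Hr Ht; first by left.
change (List.In (h :: r) (flatten
  [seq [seq x :: r0 | x <- Ls s, r0 <- tup Ls (size r) (t - s)] | s <- iota 0 t.+1])).
inversion Hr; subst.
have Hs : (nrm nu' h < t.+1)%N by rewrite ltnS; apply: leq_trans _ Ht; exact: leq_addr.
apply: (In_flatten (s := [seq x :: r0 | x <- Ls (nrm nu' h), r0 <- tup Ls (size r) (t - nrm nu' h)])).
  apply: (In_map (fun s => [seq x :: r0 | x <- Ls s, r0 <- tup Ls (size r) (t - s)])).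
  apply: In_mem; by rewrite mem_iota.
apply: (In_allpairs (fun a b => a :: b)).
  apply: HL; apply/ball_iff; by split.
apply: IH => //; rewrite leq_subRL // ltnW //.
Qed.

Definition portrait L (g : tfun d) := ([seq g w | w <- levelw L], [seq sec g w | w <- levelw L]).

Definition cover_list nu L Ls t : seq (tfun d) :=
  let D := size (levelw L) in
  [seq epsilon (inhabits id) (fun g => G nu g /\ portrait L g = p)
  | p <- [seq (a, r) | a <- allseqs (levelw L) D, r <- tup Ls D t]].

Lemma size_cover_list nu L Ls t :
  size (cover_list nu L Ls t) = (size (levelw L) ^ size (levelw L) * size (tup Ls (size (levelw L)) t))%N.
Proof. by rewrite /cover_list size_map size_allpairs size_allseqs. Qed.

Lemma cover_list_ok nu L Ls t : (forall s h, ball (nu + L) s h -> List.In h (Ls s)) ->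
  forall g, G nu g -> (T L nu g <= t)%N -> List.In g (cover_list nu L Ls t).
Proof.
move=> HL g Hg Ht.
have Wg := G_waut Hg.
have Hp : List.In (portrait L g) [seq (a, r) | a <- allseqs (levelw L) (size (levelw L)),
                                              r <- tup Ls (size (levelw L)) t].
  apply: (In_allpairs pair).
    rewrite -(size_map g); apply: In_allseqs => x Hx; apply: In_mem.
    move: Wg => [_ [Sg _]].
    have : x \in [seq g w | w <- levelw L].
      elim: (levelw L) Hx => //= y s IH [->|H]; rewrite in_cons ?eqxx //; by rewrite IH ?orbT.
    by move/mapP => [w Hw ->]; rewrite mem_levelw Sg -mem_levelw.
  rewrite -(size_map (sec g)); apply: (In_tup HL).
    apply: (proj2 (List.Forall_forall _ _)) => h Hh.
    have : exists2 w, w \in levelw L & h = sec g w.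
      elim: (levelw L) Hh => //= y s IH [<-|H]; first by exists y; rewrite ?mem_head.
      by case: (IH H) => w Hw ->; exists w; rewrite // in_cons Hw orbT.
    case => w Hw ->; have := G_sec w Hg; by move: Hw; rewrite mem_levelw => /eqP ->.
  by rewrite -map_comp.
pose f := fun p => epsilon (inhabits id) (fun g => G nu g /\ portrait L g = p).
have Hin := In_map f Hp.
have [Hg' Ep] : G nu (f (portrait L g)) /\ portrait L (f (portrait L g)) = portrait L g.
  apply: (epsilon_spec (inhabits id) (fun g0 => G nu g0 /\ portrait L g0 = portrait L g)).
  by exists g.
suff Eg : f (portrait L g) = g by move: Hin; rewrite Eg.
apply: (@portrait_inj L) (G_waut Hg') Wg _ => w Hw.
have Hi : (index w (levelw L) < size (levelw L))%N by rewrite index_mem.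
move: Ep; rewrite /portrait => -[E1 E2]; split.
  have := congr1 (fun s => nth [::] s (index w (levelw L))) E1.
  by rewrite /= !(nth_map [::] _ _ Hi) nth_index.
have := congr1 (fun s => nth id s (index w (levelw L))) E2.
by rewrite /= !(nth_map [::] _ _ Hi) nth_index.
Qed.

Lemma letter_le1 nu s : List.In s (S nu) -> (l nu s <= 1)%N.
Proof. exact: (proj1 (proj2 (proj2 (proj2 (Hfam nu)))) s). Qed.

Lemma split_weight nu w : word_over (S nu) w -> forall m, (m <= weight (l nu) w)%N ->
  exists u v, w = u ++ v /\ weight (l nu) u = m.
Proof.
elim: w => [|s w IH] Hw m Hm.
  exists [::], [::]; split => //; move: Hm; rewrite leqn0 => /eqP ->; done.
case: m Hm => [|m] Hm; first by exists [::], (s :: w).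
inversion Hw; subst.
have Hs1 := letter_le1 H1.
have Hm' : (m.+1 - l nu s <= weight (l nu) w)%N by rewrite leq_subLR.
have [u [v [-> Hu]]] := IH H2 (m.+1 - l nu s)%N Hm'.
exists (s :: u), v; split => //; change (l nu s + weight (l nu) u = m.+1)%N; rewrite Hu subnKC //.
by apply: leq_trans Hs1 _.
Qed.

Lemma blocks nu M q w : word_over (S nu) w -> (weight (l nu) w <= q.+1 * M)%N ->
  exists ws : seq (seq (tfun d)), size ws = q.+1 /\
    List.Forall (fun u => word_over (S nu) u /\ (weight (l nu) u <= M)%N) ws /\ flatten ws = w.
Proof.
elim: q w => [|q IH] w Hw Hwt.
  exists [:: w]; split => //; split; last by rewrite /= cats0.
  constructor; last constructor; split => //; by rewrite mul1n in Hwt.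
case: (leqP (weight (l nu) w) M) => HM.
  exists (w :: nseq q.+1 [::]); split; first by rewrite /= size_nseq.
  have Hfl : forall k, flatten (nseq k ([::] : seq (tfun d))) = [::] by elim.
  split; last by change (w ++ flatten (nseq q.+1 [::]) = w); rewrite Hfl cats0.
  constructor => //; elim: q.+1 => [|k IHk] /=; constructor => //; split => //; constructor.
have [u [v [Ew Hu]]] := split_weight Hw (ltnW HM).
have [Hwu Hwv] : word_over (S nu) u /\ word_over (S nu) v by apply: word_over_cat_inv; rewrite -Ew.
have Hv : (weight (l nu) v <= q.+1 * M)%N.
  move: Hwt; rewrite Ew weight_cat Hu mulSn leq_add2l //.
have [ws [Hs [Hf Hfl]]] := IH v Hwv Hv.
exists (u :: ws); split; first by rewrite /= Hs.
split; last by rewrite /= Hfl Ew.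
constructor => //; split => //; by rewrite Hu.
Qed.

Lemma prod_word_flatten (ws : seq (seq (tfun d))) :
  prod_word (flatten ws) = prod_word (map (@prod_word d) ws).
Proof. elim: ws => //= u ws IH; by rewrite prod_word_cat IH. Qed.

Lemma first_pos nu w : word_over (S nu) w -> (0 < weight (l nu) w)%N ->
  exists u s v, w = u ++ s :: v /\ weight (l nu) u = 0%N /\ l nu s = 1%N /\ List.In s (S nu).
Proof.
elim: w => [|s w IH] Hw Hpos //.
inversion Hw; subst.
case E: (l nu s) => [|k].
  have [u [s' [v [-> [H0 [H1' H2']]]]]] : exists u s v, w = u ++ s :: v /\ weight (l nu) u = 0%N /\ l nu s = 1%N /\ List.In s (S nu).
    apply: IH => //; move: Hpos; by rewrite /weight /= E.
  exists (s :: u), s', v; split => //; split => //; rewrite /weight /= E; exact: H0.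
exists [::], s, w; split => //; split => //; split => //.
have := letter_le1 H1; rewrite E; by case: k {E}.
Qed.

Fixpoint crude (nu : nat) (LF : seq (tfun d)) (n : nat) : seq (tfun d) :=
  if n is n'.+1 then
    [seq f \o x | f <- LF, x <- [seq s \o b | s <- id :: S nu, b <- crude nu LF n']]
  else LF.

Lemma size_crude nu LF n : size (crude nu LF n) = (size LF * ((size (S nu)).+1 * size LF) ^ n)%N.
Proof.
elim: n => [|n IH]; first by rewrite /= expn0 muln1.
change (size [seq f \o x | f <- LF, x <- [seq s \o b | s <- id :: S nu, b <- crude nu LF n]] =
  size LF * ((size (S nu)).+1 * size LF) ^ n.+1)%N.
rewrite !size_allpairs IH expnS.
change (size (id :: S nu)) with (size (S nu)).+1.
by rewrite !mulnA [(size LF * _.+1)%N]mulnC.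
Qed.

Lemma crude_ok nu LF : (forall g, ball nu 0 g -> List.In g LF) ->
  forall n g, ball nu n g -> List.In g (crude nu LF n).
Proof.
move=> HF; elim => [|n IH] g Hg /=; first exact: HF.
have Hid : List.In id LF by apply: HF; exists [::]; split => //; constructor.
case: Hg => w [Hw [<- Hn]].
case: (leqP (weight (l nu) w) n) => Hn'.
  have -> : prod_word w = id \o (id \o prod_word w) by [].
  apply: (In_allpairs (fun f x => f \o x)) (Hid) _.
  have := @In_allpairs _ _ _ (fun s b => s \o b) id (prod_word w) (id :: S nu) (crude nu LF n).
  apply; first by left.
  apply: IH; by exists w.
have [u [s [v [Ew [Hu [Hs HsS]]]]]] := first_pos Hw (leq_ltn_trans (leq0n _) Hn').
have [Hwu Hwv] : word_over (S nu) u /\ word_over (S nu) (s :: v) by apply: word_over_cat_inv; rewrite -Ew.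
inversion Hwv; subst.
rewrite prod_word_cat.
apply: (In_allpairs (fun f x => f \o x)).
  apply: HF; exists u; split => //; split => //; by rewrite Hu.
have := @In_allpairs _ _ _ (fun s b => s \o b) s (prod_word v) (id :: S nu) (crude nu LF n).
apply; first by right.
apply: IH; exists v; split => //; split => //.
move: Hn; rewrite weight_cat Hu /weight /= Hs add0n add1n ltnS //.
Qed.

Fixpoint seqs (LI LB : seq (tfun d)) (q j : nat) : seq (seq (tfun d)) :=
  if q is q'.+1 then
    [seq x :: r | x <- LI, r <- seqs LI LB q' j] ++
    (if j is j'.+1 then [seq x :: r | x <- LB, r <- seqs LI LB q' j'] else [::])
  else [:: [::]].

Lemma In_allpairs_inv (A B C : Type) (f : A -> B -> C) z s t :
  List.In z [seq f a b | a <- s, b <- t] -> exists x y, List.In x s /\ List.In y t /\ z = f x y.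
Proof.
elim: s => //= x s IH H0; case: (List.in_app_or _ _ _ H0) => H.
  clear IH H0; elim: t H => //= y t IHt [<-|H]; first by exists x, y; split; [left|split; [left|]].
  have [x' [y' [H1 [H2 H3]]]] := IHt H; exists x', y'; split => //; split => //; by right.
have [x' [y' [H1 [H2 H3]]]] := IH H; exists x', y'; split; [by right|by split].
Qed.

Lemma seqs_mono LI LB q j j' r : (j <= j')%N -> List.In r (seqs LI LB q j) -> List.In r (seqs LI LB q j').
Proof.
elim: q j j' r => [|q IH] j j' r Hj //=.
move=> H0; case: (List.in_app_or _ _ _ H0) => H; apply: List.in_or_app.
  left; have [x [y [H1 [H2 ->]]]] := In_allpairs_inv H.
  apply: (In_allpairs (fun a b => a :: b)) => //; exact: IH H2.
clear H0; case: j Hj H => [|j] Hj H //; case: j' Hj => [|j'] Hj //.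
right; have [x [y [H1 [H2 ->]]]] := In_allpairs_inv H.
apply: (In_allpairs (fun a b => a :: b)) => //; exact: IH H2.
Qed.

Lemma size_seqs LI LB q j :
  (size (seqs LI LB q j) <= 2 ^ q * (size LI).+1 ^ q * (size LB).+1 ^ j)%N.
Proof.
elim: q j => [|q IH] j /=; first by rewrite muln1 mul1n expn_gt0.
rewrite size_cat size_allpairs.
have X1 : (0 < (size LI).+1 ^ q)%N by rewrite expn_gt0.
have H1 : (size LI * size (seqs LI LB q j) <= 2 ^ q * (size LI).+1 ^ q.+1 * (size LB).+1 ^ j)%N.
  apply: leq_trans (leq_mul (leqnSn (size LI)) (IH j)) _.
  rewrite expnS; nia.
have H2 : (size (if j is j'.+1 then [seq x :: r | x <- LB, r <- seqs LI LB q j'] else [::])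
           <= 2 ^ q * (size LI).+1 ^ q.+1 * (size LB).+1 ^ j)%N.
  clear H1; case: j => [|j]; first by [].
  rewrite size_allpairs; apply: leq_trans (leq_mul (leqnSn (size LB)) (IH j)) _.
  rewrite !expnS; nia.
rewrite expnS; nia.
Qed.

Section Key.
Variables (nu M p L : nat) (LI LB : seq (tfun d)).
Hypothesis HM : (0 < M)%N.
Hypothesis Hp : (0 < p)%N.
Hypothesis HLB : forall b, ball nu M b -> List.In b LB.
Hypothesis HLI : forall b, ball nu M b -> incomp_inf S l nu b -> List.In b LI.
Hypothesis Hstab : forall b, ball nu M b -> incomp_inf S l nu b \/ ~ incomp S l L nu b.

Lemma G_prod (bs : seq (tfun d)) : List.Forall (G nu) bs -> G nu (prod_word bs).
Proof.
elim: bs => [|c cs IHc] Hc /=; first exact: G_id.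
inversion Hc; subst; apply: G_comp => //; exact: IHc.
Qed.

Lemma blocks_T (bs : seq (tfun d)) : List.Forall (ball nu M) bs ->
  exists c, (T L nu (prod_word bs) + c <= sumn (map (nrm nu) bs))%N /\
            List.In bs (seqs LI LB (size bs) c).
Proof.
elim: bs => [|b bs IH] H.
  exists 0%N; split; first by rewrite T_id.
  by left.
inversion H; subst.
have [c [Hc Hin]] := IH H3.
have Gb : G nu b by case/ball_iff: H2.
have GP : G nu (prod_word bs).
  apply: G_prod; apply: (List.Forall_impl _ _ H3) => x Hx; by case/ball_iff: Hx.
have HT := T_sub L Gb GP.
case: (Hstab H2) => Hb.
  exists c; split.
    apply: leq_trans (leq_add HT (leqnn c)) _; rewrite -addnA /=.
    apply: leq_add; [exact: T_le|exact: Hc].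
  change (List.In (b :: bs) ([seq x :: r | x <- LI, r <- seqs LI LB (size bs) c] ++
    (if c is j'.+1 then [seq x :: r | x <- LB, r <- seqs LI LB (size bs) j'] else [::]))).
  apply: List.in_or_app; left; apply: (In_allpairs (fun a b => a :: b)) => //; exact: HLI.
exists c.+1; split.
  apply: leq_trans (leq_add HT (leqnn c.+1)) _; rewrite /= addnS -addnA -addSn.
  apply: leq_add; [exact: not_incomp_T|exact: Hc].
change (List.In (b :: bs) ([seq x :: r | x <- LI, r <- seqs LI LB (size bs) c.+1] ++
    [seq x :: r | x <- LB, r <- seqs LI LB (size bs) c])).
apply: List.in_or_app; right; apply: (In_allpairs (fun a b => a :: b)) => //; exact: HLB.
Qed.

Lemma key_cover Ls : (forall s h, ball (nu + L) s h -> List.In h (Ls s)) ->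
  forall n g, ball nu n g ->
  List.In g (cover_list nu L Ls (n - (n %/ M).+1 %/ p) ++
             map (@prod_word d) (seqs LI LB (n %/ M).+1 ((n %/ M).+1 %/ p))).
Proof.
move=> HLs n g [w [Hw [<- Hn]]].
set q := (n %/ M)%N.
have Hq : (weight (l nu) w <= q.+1 * M)%N by apply: leq_trans Hn _; apply: ltnW; exact: ltn_ceil.
have [ws [Hs [Hf Hfl]]] := blocks Hw Hq.
have Hbs : List.Forall (ball nu M) (map (@prod_word d) ws).
  clear Hs Hfl; elim: ws Hf => [|u ws IH] Hf /=; constructor; inversion Hf; subst.
    by case: H1 => Hu1 Hu2; exists u.
  exact: IH.
have Hsum : (sumn (map (nrm nu) (map (@prod_word d) ws)) <= n)%N.
  apply: leq_trans Hn; rewrite -Hfl.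
  clear Hs Hfl Hbs; elim: ws Hf => [|u ws IH] Hf //=; inversion Hf; subst.
  rewrite weight_cat; apply: leq_add; [exact: norm_le_weight (proj1 H1)|exact: IH].
set bs := map (@prod_word d) ws.
have Eg : prod_word w = prod_word bs by rewrite -Hfl prod_word_flatten.
have [c [Hc Hin]] := blocks_T Hbs.
have Hsb : size bs = q.+1 by rewrite /bs size_map.
rewrite Hsb in Hin.
apply: List.in_or_app.
case: (leqP q.+1 (c * p)) => Hcp.
  left; rewrite Eg; apply: cover_list_ok => //; first by apply: G_prod; apply: (List.Forall_impl _ _ Hbs) => x Hx; case/ball_iff: Hx.
  have Hcq : (q.+1 %/ p <= c)%N by rewrite -(leq_pmul2r Hp); apply: leq_trans (leq_trunc_div _ _) Hcp.
  move: Hc Hsum Hcq; rewrite /bs; lia.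
right; rewrite Eg; apply: In_map; apply: (seqs_mono _ Hin).
rewrite leq_divRL //; exact: ltnW.
Qed.

End Key.

Section MainReal.
Local Open Scope R_scope.

Lemma sum_bound (f : nat -> nat) (s : seq nat) c :
  (forall i, i \in s -> INR (f i) <= c) -> INR (sumn (map f s)) <= INR (size s) * c.
Proof.
elim: s => [|i s IH] H; first by rewrite /= Rmult_0_l; right.
change (INR (f i + sumn (map f s)) <= INR (size s).+1 * c).
rewrite INR_addn S_INR Rmult_plus_distr_r Rmult_1_l Rplus_comm.
apply: Rplus_le_compat; last by apply: H; rewrite mem_head.
apply: IH => j Hj; apply: H; by rewrite in_cons Hj orbT.
Qed.

Lemma tup_bound Ls K x : 0 < K -> 0 <= x ->
  (forall s, INR (size (Ls s)) <= K * exp (x * INR s)) ->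
  forall D t, INR (size (tup Ls D t)) <= (INR t + 1) ^ D * K ^ D * exp (x * INR t).
Proof.
move=> HK Hx HL; elim => [|D IH] t.
  rewrite /= !Rmult_1_l; apply: exp_ge1; apply: Rmult_le_pos => //; exact: pos_INR.
rewrite size_tup.
apply: Rle_trans (sum_bound (c := (INR t + 1) ^ D * K ^ D.+1 * exp (x * INR t)) _) _.
  move=> s; rewrite mem_iota add0n ltnS => Hs.
  rewrite INR_muln.
  have H1 := HL s; have H2 := IH (t - s)%N.
  rewrite INR_subn // in H2.
  have Hs' := INR_leq Hs.
  have Hp1 : 0 <= (INR t - INR s + 1) ^ D by apply: pow_le; lra.
  have Hp2 : (INR t - INR s + 1) ^ D <= (INR t + 1) ^ D.
    apply: pow_incr; have := pos_INR s; lra.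
  have HKD : 0 < K ^ D by apply: pow_lt.
  have E : exp (x * INR s) * exp (x * (INR t - INR s)) = exp (x * INR t).
    rewrite -exp_plus; congr exp; ring.
  apply: Rle_trans (Rmult_le_compat _ _ _ _ (pos_INR _) (pos_INR _) H1 H2) _.
  have -> : K * exp (x * INR s) * ((INR t - INR s + 1) ^ D * K ^ D * exp (x * (INR t - INR s)))
    = (INR t - INR s + 1) ^ D * (K * K ^ D) * (exp (x * INR s) * exp (x * (INR t - INR s))) by ring.
  rewrite E /=; apply: Rmult_le_compat_r; first exact: Rlt_le (exp_pos _).
  apply: Rmult_le_compat_r => //; apply: Rlt_le; apply: Rmult_lt_0_compat => //.
rewrite size_iota S_INR; change ((INR t + 1) * ((INR t + 1) ^ D * K ^ D.+1 * exp (x * INR t)) <=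
  (INR t + 1) * (INR t + 1) ^ D * K ^ D.+1 * exp (x * INR t)); right; ring.
Qed.

Definition Adm nu (x : R) := exists K, 0 < K /\ forall n, exists lst : seq (tfun d),
  (forall g, ball nu n g -> List.In g lst) /\ INR (size lst) <= K * exp (x * INR n).

Lemma Adm_mono nu x y : x <= y -> Adm nu x -> Adm nu y.
Proof.
move=> Hxy [K [HK H]]; exists K; split => // n; have [lst [H1 H2]] := H n.
exists lst; split => //; apply: Rle_trans H2 _; apply: Rmult_le_compat_l; first lra.
apply: exp_le; apply: Rmult_le_compat_r => //; exact: pos_INR.
Qed.

Lemma Adm_lists nu x : Adm nu x -> exists K, 0 < K /\ exists Ls : nat -> seq (tfun d),
  forall n, (forall g, ball nu n g -> List.In g (Ls n)) /\ INR (size (Ls n)) <= K * exp (x * INR n).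
Proof.
move=> [K [HK H]]; exists K; split => //.
exists (fun n => epsilon (inhabits [::]) (fun lst => (forall g, ball nu n g -> List.In g lst) /\
   INR (size lst) <= K * exp (x * INR n))).
move=> n; exact: (epsilon_spec (inhabits [::]) (fun lst => (forall g, ball nu n g -> List.In g lst) /\
   INR (size lst) <= K * exp (x * INR n)) (H n)).
Qed.

Lemma Adm_level nu L x eps : Adm (nu + L) x -> 0 <= x -> 0 < eps -> Adm nu (x + eps).
Proof.
move=> HA Hx He.
have [K [HK [Ls HLs]]] := Adm_lists HA.
set D := size (levelw L).
set a := eps / (INR D + 1).
have HD := pos_INR D.
have Ha : 0 < a by apply: Rdiv_lt_0_compat; lra.
have HaD : a * INR D <= eps.
  have E : a * (INR D + 1) = eps by rewrite /a; field; lra.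
  rewrite -E; apply: Rmult_le_compat_l; lra.
have Hm : 0 < Rmin 1 a by apply: Rmin_glb_lt; lra.
have HKD : 0 < K ^ D by apply: pow_lt.
have HmD : 0 < (/ Rmin 1 a) ^ D by apply: pow_lt; apply: Rinv_0_lt_compat.
have HDD := pos_INR (D ^ D).
set C := INR (D ^ D) * K ^ D * (/ Rmin 1 a) ^ D + 1.
have HC : 0 < C.
  rewrite /C; have : 0 <= INR (D ^ D) * K ^ D * (/ Rmin 1 a) ^ D; last lra.
  apply: Rmult_le_pos; [apply: Rmult_le_pos|]; lra.
exists C; split => // n.
exists (cover_list nu L Ls n); split.
  move=> g /ball_iff [Hg Hn]; apply: cover_list_ok => //; first by move=> s h Hh; exact: (proj1 (HLs s)).
  exact: leq_trans (T_le L Hg) Hn.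
rewrite size_cover_list INR_muln.
have H1 := tup_bound HK Hx (fun s => proj2 (HLs s)) D n.
have H2 := poly_exp D n Ha.
have Hn := pos_INR n.
have E3 : exp (a * INR D * INR n) * exp (x * INR n) <= exp ((x + eps) * INR n).
  rewrite -exp_plus; apply: exp_le; nra.
have Hex := exp_pos (x * INR n).
have H3 : INR (size (tup Ls D n)) <= K ^ D * (/ Rmin 1 a) ^ D * exp ((x + eps) * INR n).
  apply: Rle_trans H1 _.
  apply: Rle_trans (_ : (/ Rmin 1 a) ^ D * exp (a * INR D * INR n) * K ^ D * exp (x * INR n) <= _).
    apply: Rmult_le_compat_r; [lra|apply: Rmult_le_compat_r; lra].
  have -> : (/ Rmin 1 a) ^ D * exp (a * INR D * INR n) * K ^ D * exp (x * INR n) =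
    K ^ D * (/ Rmin 1 a) ^ D * (exp (a * INR D * INR n) * exp (x * INR n)) by ring.
  apply: Rmult_le_compat_l => //; nra.
have Hexp := exp_pos ((x + eps) * INR n).
apply: Rle_trans (Rmult_le_compat_l _ _ _ HDD H3) _.
rewrite /C; nra.
Qed.


End MainReal.

Section Final.
Variables (A : nat) (delta : nat -> nat).
Hypothesis HA : forall nu, (size (S nu) <= A)%N.
Hypothesis Hdmono : nondecreasing delta.
Hypothesis Hdpos : forall n, (0 < delta n)%N.
Local Open Scope R_scope.

Definition good nu := forall n, card_le (fun g => incomp_inf S l nu g /\ sphere S l nu n g) (delta n).

Lemma size_length (X : Type) (s : seq X) : size s = length s.
Proof. by elim: s => //= x s ->. Qed.

Lemma good_F nu : good nu -> exists LF : seq (tfun d),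
  (forall g, ball nu 0 g -> List.In g LF) /\ (size LF <= delta 0)%N.
Proof.
move=> Hg; have [lst [Hl Hc]] := Hg 0%N; exists lst; split; last by rewrite size_length.
move=> g /ball_iff [HG Hn]; have Hn0 : nrm nu g = 0%N by apply/eqP; rewrite -leqn0.
apply: Hc; split; first exact: norm0_incomp.
by split.
Qed.

Lemma good_I nu : good nu -> forall M, exists LI : seq (tfun d),
  (forall b, ball nu M b -> incomp_inf S l nu b -> List.In b LI) /\ (size LI <= M.+1 * delta M)%N.
Proof.
move=> Hg; elim => [|M [LI [H1 H2]]].
  have [lst [Hl Hc]] := Hg 0%N; exists lst; split; last by rewrite mul1n size_length.
  move=> g /ball_iff [HG Hn] HI; have Hn0 : nrm nu g = 0%N by apply/eqP; rewrite -leqn0.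
  apply: Hc; split => //.
have [lst [Hl Hc]] := Hg M.+1; exists (LI ++ lst); split.
  move=> b /ball_iff [HG Hn] HI; apply: List.in_or_app.
  case: (leqP (nrm nu b) M) => HbM.
    left; apply: H1 => //; exact/ball_iff.
  right; apply: Hc; split => //; split => //; apply/eqP; by rewrite eqn_leq Hn HbM.
rewrite size_cat; have := Hdmono (leqnSn M); move: Hl; rewrite -size_length => Hl Hm.
rewrite mulSn addnC; apply: leq_add => //; apply: leq_trans H2 _; by rewrite leq_mul2l Hm orbT.
Qed.

Lemma leq_pow m n e : (m <= n)%N -> (m ^ e <= n ^ e)%N.
Proof. move=> H; elim: e => // e IH; rewrite !expnS; exact: leq_mul. Qed.

Lemma good_crude nu : good nu -> forall n, exists lst : seq (tfun d),
  (forall g, ball nu n g -> List.In g lst) /\ (size lst <= delta 0 * (A.+1 * delta 0) ^ n)%N.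
Proof.
move=> Hg n; have [LF [H1 H2]] := good_F Hg.
exists (crude nu LF n); split; first exact: crude_ok.
rewrite size_crude; apply: leq_mul => //; apply: leq_pow => //; apply: leq_mul => //.
by rewrite ltnS.
Qed.

Lemma stab_list nu (lst : seq (tfun d)) : exists L, forall b, List.In b lst ->
  incomp_inf S l nu b \/ forall L', (L <= L')%N -> ~ incomp S l L' nu b.
Proof.
elim: lst => [|b lst [L0 IH]]; first by exists 0%N.
case: (classic (incomp_inf S l nu b)) => Hb.
  exists L0 => c [<-|Hc]; [by left|exact: IH].
have [k Hk] : exists k, ~ ((1 <= k)%N -> incomp S l k nu b) by apply: not_all_ex_not.
have [Hk1 Hk2] : (1 <= k)%N /\ ~ incomp S l k nu b.
  split; [by apply: NNPP => H; apply: Hk => H'; by []|by move=> H; apply: Hk].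
exists (maxn L0 k) => c [<-|Hc].
  right => L' HL' HI; apply: Hk2; apply: incomp_mono_le HI; exact: leq_trans (leq_maxr _ _) HL'.
case: (IH c Hc) => [H|H]; [by left|right => L' HL'; apply: H; exact: leq_trans (leq_maxl _ _) HL'].
Qed.

Lemma stab nu M (LB : seq (tfun d)) : (forall b, ball nu M b -> List.In b LB) ->
  exists L, forall b, ball nu M b -> incomp_inf S l nu b \/ ~ incomp S l L nu b.
Proof.
move=> HLB; have [L HL] := stab_list nu LB; exists L => b Hb.
case: (HL b (HLB b Hb)) => H; [by left|right; exact: H].
Qed.

Lemma INR_le_exp k : INR k <= exp (INR k).
Proof. have := exp_ineq1_le (INR k); lra. Qed.

Lemma Adm_good nu : good nu -> Adm nu (INR (A.+1 * delta 0)).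
Proof.
move=> Hg; exists (INR (delta 0) + 1); split; first by have := pos_INR (delta 0); lra.
move=> n; have [lst [H1 H2]] := good_crude Hg n; exists lst; split => //.
apply: Rle_trans (INR_leq H2) _; rewrite INR_muln INR_expn.
have H0 := pos_INR (delta 0).
have H3 : INR (A.+1 * delta 0) ^ n <= exp (INR (A.+1 * delta 0) * INR n).
  rewrite -exp_pow; apply: pow_incr; split; [exact: pos_INR|exact: INR_le_exp].
have := exp_pos (INR (A.+1 * delta 0) * INR n).
have := pow_le (INR (A.+1 * delta 0)) n (pos_INR _).
nra.
Qed.


Lemma t_bound (n j p M : nat) : (0 < p)%N -> (0 < M)%N -> (n < j.+1 * p * M)%N ->
  INR (n - j) <= INR n * (1 - / (INR M * INR p)) + 1.
Proof.
move=> Hp HM Hn.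
have HP1 : 1 <= INR M * INR p.
  have := INR_leq HM; have := INR_leq Hp; rewrite /= => H1 H2.
  have : 1 * 1 <= INR M * INR p by apply: Rmult_le_compat; lra.
  lra.
set P := INR M * INR p in HP1 *.
have HPpos : 0 < P by lra.
have HnR : INR n <= (INR j + 1) * P.
  have := INR_leq (ltnW Hn); rewrite !INR_muln S_INR /P => H; lra.
have Hinv : INR n * / P <= INR j + 1.
  apply: (Rmult_le_reg_r P) => //; rewrite Rmult_assoc Rinv_l; lra.
have Hi1 : / P <= 1.
  rewrite -Rinv_1; apply: Rinv_le_contravar; lra.
have Hn0 := pos_INR n.
case: (leqP j n) => Hjn.
  rewrite INR_subn //; lra.
have -> : (n - j = 0)%N by apply/eqP; rewrite subn_eq0 ltnW.
rewrite /=; have : 0 <= INR n * (1 - / P) by apply: Rmult_le_pos; lra.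
lra.
Qed.

Lemma size2_real (n M p q j Q1 E2 : nat) h : 0 < h -> (q * M <= n)%N -> (j * p <= q.+1)%N ->
  INR Q1 <= exp (h * INR M / 4) -> INR E2 <= exp (INR p * h / 4) ->
  INR (Q1 ^ q.+1 * E2 ^ (M * j)) <= exp (h * INR M / 2) * exp (h / 2 * INR n).
Proof.
move=> Hh Hq Hj HQ HE.
rewrite INR_muln !INR_expn.
have H1 : INR Q1 ^ q.+1 <= exp (h * INR M / 4 * INR q.+1).
  rewrite -exp_pow; apply: pow_incr; split => //; exact: pos_INR.
have H2 : INR E2 ^ (M * j) <= exp (INR p * h / 4 * INR (M * j)).
  rewrite -exp_pow; apply: pow_incr; split => //; exact: pos_INR.
apply: Rle_trans (Rmult_le_compat _ _ _ _ (pow_le _ _ (pos_INR _)) (pow_le _ _ (pos_INR _)) H1 H2) _.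
rewrite -!exp_plus; apply: exp_le.
have Hq' := INR_leq Hq; have Hj' := INR_leq Hj.
rewrite INR_muln in Hq'; rewrite INR_muln in Hj'.
rewrite INR_muln S_INR; rewrite S_INR in Hj'.
have HM := pos_INR M; have Hp := pos_INR p; have Hjj := pos_INR j; have HqR := pos_INR q.
have E1 : INR p * h / 4 * (INR M * INR j) = h / 4 * INR M * (INR j * INR p) by unfold Rdiv; ring.
rewrite E1.
have F1 : h / 4 * INR M * (INR j * INR p) <= h / 4 * INR M * (INR q + 1).
  apply: Rmult_le_compat_l => //; apply: Rmult_le_pos; lra.
have F2 : INR M * (INR q + 1) <= INR n + INR M by nra.
have F3 : h / 4 * (INR M * (INR q + 1)) <= h / 4 * (INR n + INR M).
  apply: Rmult_le_compat_l => //; lra.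
have E2' : h * INR M / 4 * (INR q + 1) = h / 4 * (INR M * (INR q + 1)) by unfold Rdiv; ring.
have E3 : h / 4 * INR M * (INR q + 1) = h / 4 * (INR M * (INR q + 1)) by unfold Rdiv; ring.
have E4 : h * INR M / 2 + h / 2 * INR n = 2 * (h / 4 * (INR n + INR M)) by unfold Rdiv; field.
rewrite E2' E4; rewrite E3 in F1; lra.
Qed.

Lemma size2_nat (LI LB : seq (tfun d)) M q j :
  (size LI <= M.+1 * delta M)%N -> (size LB <= delta 0 * (A.+1 * delta 0) ^ M)%N -> (0 < M)%N ->
  (size (seqs LI LB q.+1 j) <= (4 * M.+1 * delta M) ^ q.+1 * ((2 * delta 0 * A.+1) ^ 2) ^ (M * j))%N.
Proof.
move=> HLI HLB HM.
apply: leq_trans (size_seqs _ _ _ _) _.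
rewrite -expnMn; apply: leq_mul.
  apply: leq_pow; have := Hdpos M; have : (0 < M.+1 * delta M)%N by rewrite muln_gt0 Hdpos.
  move: HLI; rewrite -mulnA; lia.
rewrite -(expnM _ 2 (M * j)) mulnA (expnM _ (2 * M)%N j); apply: leq_pow.
set E := (2 * delta 0 * A.+1)%N.
have HE : (0 < E)%N by rewrite /E !muln_gt0 Hdpos.
set Y := ((A.+1 * delta 0) ^ M)%N.
have HY : (0 < Y)%N by rewrite /Y expn_gt0 muln_gt0 Hdpos.
have H0 := Hdpos 0.
have H1 : ((size LB).+1 <= 2 * delta 0 * Y)%N by move: HLB; rewrite -/Y; nia.
have H2 : (Y <= E ^ M)%N by apply: leq_pow; rewrite /E; nia.
have H3 : (2 * delta 0 * Y <= E ^ M.+1)%N.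
  rewrite expnS; apply: leq_mul => //; rewrite /E; nia.
apply: leq_trans H1 (leq_trans H3 _); apply: leq_pexp2l => //; lia.
Qed.

Lemma Adm_key nu M p h x eps :
  good nu -> (0 < M)%N -> (0 < p)%N -> 0 < h -> 0 <= x -> 0 < eps ->
  INR (4 * M.+1 * delta M) <= exp (h * INR M / 4) ->
  INR ((2 * delta 0 * A.+1) ^ 2) <= exp (INR p * h / 4) ->
  (forall L, Adm (nu + L) x) ->
  Adm nu (Rmax (x * (1 - / (INR M * INR p)) + eps) (h / 2)).
Proof.
move=> Hg HM Hp Hh Hx He HQ1 HE2 HAdm.
have [LB [HLB HLBs]] := good_crude Hg M.
have [L HL] := stab HLB.
have [LI [HLI HLIs]] := good_I Hg M.
have [K [HK [Ls HLs]]] := Adm_lists (HAdm L).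
set D := size (levelw L).
set a := eps / (INR D + 1).
have HD := pos_INR D.
have Ha : 0 < a by apply: Rdiv_lt_0_compat; lra.
have HaD : a * INR D <= eps.
  have E : a * (INR D + 1) = eps by rewrite /a; field; lra.
  rewrite -E; apply: Rmult_le_compat_l; lra.
have Hm : 0 < Rmin 1 a by apply: Rmin_glb_lt; lra.
have HKD : 0 < K ^ D by apply: pow_lt.
have HmD : 0 < (/ Rmin 1 a) ^ D by apply: pow_lt; apply: Rinv_0_lt_compat.
have HDD := pos_INR (D ^ D).
set eta := / (INR M * INR p).
set y1 := x * (1 - eta) + eps.
set C1 := INR (D ^ D) * ((/ Rmin 1 a) ^ D * K ^ D * exp x).
set C2 := exp (h * INR M / 2).
have HC1 : 0 <= C1.
  rewrite /C1; apply: Rmult_le_pos => //; apply: Rmult_le_pos; [apply: Rmult_le_pos|]; try lra.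
  exact: Rlt_le (exp_pos _).
have HC2 : 0 < C2 by apply: exp_pos.
exists (C1 + C2); split; first lra.
move=> n.
set q := (n %/ M)%N.
set j := (q.+1 %/ p)%N.
set t := (n - j)%N.
exists (cover_list nu L Ls t ++ map (@prod_word d) (seqs LI LB q.+1 j)); split.
  move=> g Hgn; apply: (key_cover HM Hp HLB HLI HL) => //.
  by move=> s h0 Hh0; exact: (proj1 (HLs s)).
have Hn := pos_INR n.
rewrite size_cat size_map INR_addn.
have Hmax1 : exp (y1 * INR n) <= exp (Rmax y1 (h / 2) * INR n).
  apply: exp_le; apply: Rmult_le_compat_r => //; exact: Rmax_l.
have Hmax2 : exp (h / 2 * INR n) <= exp (Rmax y1 (h / 2) * INR n).
  apply: exp_le; apply: Rmult_le_compat_r => //; exact: Rmax_r.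
have S1 : INR (size (cover_list nu L Ls t)) <= C1 * exp (y1 * INR n).
  rewrite size_cover_list INR_muln -/D /C1 Rmult_assoc; apply: Rmult_le_compat_l => //.
  have H1 := tup_bound HK Hx (fun s => proj2 (HLs s)) D t.
  apply: Rle_trans H1 _.
  have Htn : (t <= n)%N by exact: leq_subr.
  have Ht1 : (INR t + 1) ^ D <= (/ Rmin 1 a) ^ D * exp (a * INR D * INR n).
    apply: Rle_trans (poly_exp D n Ha); apply: pow_incr; have := INR_leq Htn; have := pos_INR t; lra.
  have Hnj : (n < j.+1 * p * M)%N.
    apply: leq_trans (ltn_ceil n HM) _; rewrite leq_mul2r; apply/orP; right.
    exact: ltnW (ltn_ceil q.+1 Hp).
  have Ht2 := t_bound Hp HM Hnj.
  have Hxt : exp (x * INR t) <= exp x * exp (x * (1 - eta) * INR n).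
    rewrite -exp_plus; apply: exp_le.
    have : x * INR t <= x * (INR n * (1 - eta) + 1) by apply: Rmult_le_compat_l.
    rewrite /eta; lra.
  have Hexp : exp (a * INR D * INR n) * exp (x * (1 - eta) * INR n) <= exp (y1 * INR n).
    rewrite -exp_plus; apply: exp_le; rewrite /y1; nra.
  have Hpt := pow_le (INR t + 1) D (ltac:(have := pos_INR t; lra)).
  apply: Rle_trans (_ : (/ Rmin 1 a) ^ D * exp (a * INR D * INR n) * K ^ D * (exp x * exp (x * (1 - eta) * INR n)) <= _).
    apply: Rmult_le_compat; try lra.
      apply: Rmult_le_pos; lra.
      exact: Rlt_le (exp_pos _).
    apply: Rmult_le_compat_r; lra.
  have -> : (/ Rmin 1 a) ^ D * exp (a * INR D * INR n) * K ^ D * (exp x * exp (x * (1 - eta) * INR n)) =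
    (/ Rmin 1 a) ^ D * K ^ D * exp x * (exp (a * INR D * INR n) * exp (x * (1 - eta) * INR n)) by ring.
  apply: Rmult_le_compat_l => //.
  apply: Rmult_le_pos; [apply: Rmult_le_pos|]; try lra; exact: Rlt_le (exp_pos _).
have S2 : INR (size (seqs LI LB q.+1 j)) <= C2 * exp (h / 2 * INR n).
  apply: Rle_trans (INR_leq (size2_nat q j HLIs HLBs HM)) _.
  exact: (size2_real Hh (leq_trunc_div n M) (leq_trunc_div q.+1 p) HQ1 HE2).
have := exp_pos (y1 * INR n); have := exp_pos (h / 2 * INR n).
have H3 : C1 * exp (y1 * INR n) <= C1 * exp (Rmax y1 (h / 2) * INR n) by apply: Rmult_le_compat_l.
have H4 : C2 * exp (h / 2 * INR n) <= C2 * exp (Rmax y1 (h / 2) * INR n) by apply: Rmult_le_compat_l; lra.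
lra.
Qed.

Lemma choose_p h : 0 < h -> exists p, (0 < p)%N /\ INR ((2 * delta 0 * A.+1) ^ 2) <= exp (INR p * h / 4).
Proof.
move=> Hh; have [p Hp] := INR_archimed (h / 4) (INR ((2 * delta 0 * A.+1) ^ 2)) (ltac:(lra)).
have HE := pos_INR ((2 * delta 0 * A.+1) ^ 2).
exists p; split.
  case: p Hp => [|p] //=; lra.
have := exp_ineq1_le (INR p * h / 4).
have -> : INR p * h / 4 = INR p * (h / 4) by unfold Rdiv; ring.
lra.
Qed.

Lemma choose_M h : 0 < h -> ~ lesssim expn_R (fun n => INR (delta n)) ->
  exists M, (0 < M)%N /\ INR (4 * M.+1 * delta M) <= exp (h * INR M / 4).
Proof.
move=> Hh Hns.
set a := h / 16.
have Ha : 0 < a by rewrite /a; lra.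
set m := Rmin 1 a.
have Hm : 0 < m by apply: Rmin_glb_lt; lra.
have Hm1 : m <= 1 by exact: Rmin_l.
have [C1 HC1] := INR_archimed a 1 Ha.
have [C2 HC2] := INR_archimed (m * a) 4 (ltac:(nra)).
set C := (C1 + C2).+1.
have HCpos : (0 < C)%N by [].
have HCR : INR C >= INR C1 + INR C2 by rewrite /C S_INR INR_addn; lra.
have HC1' : 1 <= INR C * a by have := pos_INR C2; nra.
have Hma : 0 < m * a by nra.
have HC2' : 4 <= INR C * (m * a) by have := pos_INR C1; nra.
have [n [Hn1 Hn2]] : exists n, (1 <= n)%N /\ INR (delta (C * n)) < exp (INR n).
  apply: NNPP => Hne; apply: Hns; exists C; split => // n Hn.
  apply: Rnot_lt_le => Hlt; apply: Hne; exists n; split => //.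
set M := (C * n)%N.
have HMR : INR M = INR C * INR n by rewrite /M INR_muln.
have Hn := INR_leq Hn1; rewrite /= in Hn.
exists M; split; first by rewrite /M muln_gt0.
have H1 : INR n <= a * INR M by rewrite HMR; nra.
have Hdl : INR (delta M) <= exp (a * INR M).
  apply: Rlt_le; apply: Rlt_le_trans Hn2 _; exact: exp_le.
have HM1 : INR M + 1 <= / m * exp (a * INR M) by exact: lin_exp.
have H4 : 4 / m <= exp (a * INR M).
  apply: Rle_trans (exp_ineq1_le _).
  have : 4 <= m * (a * INR M) by rewrite HMR; nra.
  move=> H; apply: (Rmult_le_reg_l m) => //; rewrite /Rdiv -Rmult_assoc (Rmult_comm m 4) Rmult_assoc Rinv_r; nra.
have Hea := exp_pos (a * INR M).
rewrite [INR (4 * _ * _)]INR_muln [INR (4 * _)]INR_muln (S_INR M).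
have -> : INR 4 = 4 by rewrite /=; ring.
have -> : h * INR M / 4 = 4 * (a * INR M) by rewrite /a; unfold Rdiv; field.
have E4 : exp (4 * (a * INR M)) = exp (a * INR M) * exp (a * INR M) * exp (a * INR M) * exp (a * INR M).
  rewrite -!exp_plus; congr exp; ring.
rewrite E4.
have Hd0 := pos_INR (delta M).
have HM0 := pos_INR M.
have H5 : 4 * (INR M + 1) <= exp (a * INR M) * exp (a * INR M).
  apply: Rle_trans (_ : 4 * (/ m * exp (a * INR M)) <= _); first lra.
  have -> : 4 * (/ m * exp (a * INR M)) = 4 / m * exp (a * INR M) by unfold Rdiv; ring.
  apply: Rmult_le_compat_r; lra.
have He1 : 1 <= exp (a * INR M) by apply: exp_ge1; nra.
apply: Rle_trans (_ : exp (a * INR M) * exp (a * INR M) * exp (a * INR M) <= _).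
  apply: Rmult_le_compat; try nra.
have : 0 <= exp (a * INR M) * exp (a * INR M) * exp (a * INR M) by apply: Rmult_le_pos; nra.
nra.
Qed.

Section Sup.
Hypothesis Hgood : forall N, exists nu, (N <= nu)%N /\ good nu.
Hypothesis Hns : ~ lesssim expn_R (fun n => INR (delta n)).

Lemma Adm_bounded nu : Adm nu (INR (A.+1 * delta 0) + 1).
Proof.
have [nu' [Hle Hg]] := Hgood nu.
have := Adm_good Hg; rewrite -(subnKC Hle) => H.
apply: Adm_level H _ Rlt_0_1; exact: pos_INR.
Qed.

Lemma Adm_all nu0 x0 : 0 < x0 -> Adm nu0 x0.
Proof.
move=> Hx0; apply: NNPP => Hn0.
pose U := fun y => exists nu, ~ Adm nu y.
set H0 := INR (A.+1 * delta 0) + 1.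
have HU : forall y, U y -> y <= H0.
  move=> y [nu Hnu]; apply: Rnot_lt_le => Hlt; apply: Hnu.
  apply: Adm_mono (Rlt_le _ _ Hlt) (Adm_bounded nu).
have [h [Hub Hlub]] := completeness U (ex_intro _ H0 HU) (ex_intro _ x0 (ex_intro _ nu0 Hn0)).
have Hxh : x0 <= h by apply: Hub; exists nu0.
have Hh : 0 < h by lra.
have Hi : forall nu e, 0 < e -> Adm nu (h + e).
  move=> nu e He; apply: NNPP => Hn.
  have : h + e <= h by apply: Hub; exists nu.
  lra.
have Hii : forall e, 0 < e -> exists nu1, ~ Adm nu1 (h - e).
  move=> e He; apply: NNPP => Hne.
  have : h <= h - e.
    apply: Hlub => y [nu Hnu]; apply: Rnot_lt_le => Hlt; apply: Hnu.
    apply: Adm_mono (Rlt_le _ _ Hlt) _; apply: NNPP => Hn; apply: Hne; by exists nu.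
  lra.
have [p [Hp HE2]] := choose_p Hh.
have [M [HM HQ1]] := choose_M Hh Hns.
set eta := / (INR M * INR p).
have HMp : 1 <= INR M * INR p.
  have := INR_leq HM; have := INR_leq Hp; rewrite /= => H1 H2.
  have : 1 * 1 <= INR M * INR p by apply: Rmult_le_compat; lra.
  lra.
have Heta : 0 < eta by apply: Rinv_0_lt_compat; lra.
have Heta1 : eta <= 1 by rewrite /eta -Rinv_1; apply: Rinv_le_contravar; lra.
set e := h * eta / 8.
have He : 0 < e by rewrite /e; apply: Rdiv_lt_0_compat; [nra|lra].
have [nu1 Hnu1] := Hii e He.
have [nu' [Hle Hg]] := Hgood nu1.
have Hiii : ~ Adm nu' (h - 2 * e).
  move=> HA'; apply: Hnu1.
  have := @Adm_level nu1 (nu' - nu1)%N (h - 2 * e) e; rewrite subnKC // => H.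
  have -> : h - e = h - 2 * e + e by ring.
  apply: H => //; rewrite /e; nra.
apply: Hiii.
have HK := Adm_key Hg HM Hp Hh (ltac:(lra) : 0 <= h + e) He HQ1 HE2 (fun L => Hi _ e He).
apply: Adm_mono HK; apply: Rmax_lub.
  rewrite -/eta /e; nra.
rewrite /e; nra.
Qed.
End Sup.

End Final.
Section Growth.
Local Open Scope R_scope.

Fixpoint wordsle (T : seq (tfun d)) (n : nat) : seq (seq (tfun d)) :=
  if n is n'.+1 then [::] :: [seq s :: w | s <- T, w <- wordsle T n'] else [:: [::]].

Lemma size_wordsle T n : (size (wordsle T n) <= (size T).+1 ^ n)%N.
Proof.
elim: n => [|n IH] //=; rewrite size_allpairs expnS; nia.
Qed.

Lemma In_wordsle T n w : word_over T w -> (size w <= n)%N -> List.In w (wordsle T n).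
Proof.
elim: n w => [|n IH] [|s w] Hw Hs //=; try by left.
right; inversion Hw; subst; apply: (In_allpairs (fun a b => a :: b)) => //; exact: IH.
Qed.

Lemma dedup (X : Type) (P : X -> Prop) (lst : seq X) : (forall x, P x -> List.In x lst) ->
  exists l', List.NoDup l' /\ (forall x, List.In x l' <-> P x) /\ (size l' <= size lst)%N.
Proof.
elim: lst P => [|a lst IH] P H.
  exists [::]; split; first constructor; split => // x; split; [by []|exact: H].
have H' : forall x, P x /\ x <> a -> List.In x lst.
  move=> x [Px Hxa]; case: (H x Px) => // E; by case: Hxa.
have [l' [Hnd [Hin Hs]]] := IH (fun x => P x /\ x <> a) H'.
case: (classic (P a)) => Pa.
  exists (a :: l'); split; first by constructor => // /Hin [_ []].
  split; last by rewrite /= ltnS.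
  move=> x; split.
    by case => [<-|/Hin []].
  move=> Px; case: (classic (x = a)) => [->|Hxa]; [by left|right; exact/Hin].
exists l'; split => //; split; last by apply: leq_trans Hs _.
move=> x; split; first by case/Hin.
move=> Px; apply/Hin; split => // E; apply: Pa; by rewrite -E.
Qed.

Lemma word_ball_ball nu n g : word_ball (S nu) n g -> ball nu n g.
Proof.
move=> [w [Hw [Hs Hg]]]; exists w; split => //; split => //.
apply: leq_trans Hs; clear Hg; elim: w Hw => //= s w IH Hw; inversion Hw; subst.
change (l nu s + weight (l nu) w <= (size w).+1)%N.
rewrite -addn1 addnC; apply: leq_add; [exact: IH|exact: letter_le1].
Qed.

Lemma has_card_exists nu n : exists k, has_card (word_ball (S nu) n) k.
Proof.
have Hc : forall g, word_ball (S nu) n g -> List.In g (map (@prod_word d) (wordsle (S nu) n)).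
  move=> g [w [Hw [Hs <-]]]; apply: In_map; exact: In_wordsle.
have [l' [Hnd [Hin _]]] := dedup Hc.
by exists (length l'); exists l'.
Qed.

Definition wf nu n := epsilon (inhabits 0%N) (fun k => has_card (word_ball (S nu) n) k).

Lemma wf_spec nu n : has_card (word_ball (S nu) n) (wf nu n).
Proof. exact: (epsilon_spec (inhabits 0%N) _ (has_card_exists nu n)). Qed.

Lemma wf_le nu n (lst : seq (tfun d)) : (forall g, word_ball (S nu) n g -> List.In g lst) ->
  (wf nu n <= size lst)%N.
Proof.
move=> H; have [l'' [Hnd [Hlen Hin]]] := wf_spec nu n.
rewrite -Hlen size_length; apply/leP; apply: List.NoDup_incl_length => // x /Hin; exact: H.
Qed.

Lemma wf_mono nu : nondecreasing (wf nu).
Proof.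
move=> m n Hmn; have [l'' [Hnd [Hlen Hin]]] := wf_spec nu n.
rewrite -Hlen -size_length; apply: wf_le => g [w [Hw [Hs Hg]]]; apply/Hin.
exists w; split => //; split => //; exact: leq_trans Hs Hmn.
Qed.

Lemma wf_upper nu : lesssim (fun n => INR (wf nu n)) expn_R.
Proof.
exists (size (S nu)).+1; split => // n _.
have H1 : (wf nu n <= (size (S nu)).+1 ^ n)%N.
  apply: leq_trans (size_wordsle (S nu) n); rewrite -(size_map (@prod_word d)).
  apply: wf_le => g [w [Hw [Hs <-]]]; apply: In_map; exact: In_wordsle.
apply: Rle_trans (INR_leq H1) _; rewrite INR_expn /expn_R INR_muln -exp_pow.
apply: pow_incr; split; first exact: pos_INR.
have := exp_ineq1_le (INR (size (S nu)).+1); lra.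
Qed.

End Growth.

End Main.


Section FinalStep.
Local Open Scope R_scope.
Lemma final_step (d A : nat) (S : nat -> seq (tfun d)) (l : nat -> tfun d -> nat) (delta : nat -> nat) nu :
  (0 < d)%N -> non_l1_expanding_similar_family S l -> (forall nu, (size (S nu) <= A)%N) ->
  nondecreasing delta -> (forall n, (0 < delta n)%N) ->
  (forall N, exists nu, (N <= nu)%N /\ good S l delta nu) ->
  ~ lesssim expn_R (fun n => INR (delta n)) ->
  ~ lesssim expn_R (fun n => INR (wf S nu n)).
Proof.
move=> Hd Hfam HA Hdmono Hdpos Hgood' Hns [C [HC Hlow]].
have HCR : 0 < INR C by apply: lt_0_INR; apply/ltP.
set x0 := / (2 * INR C).
have Hx0 : 0 < x0 by apply: Rinv_0_lt_compat; lra.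
have [K [HK Hcov]] := Adm_all Hfam Hd HA Hdmono Hdpos Hgood' Hns nu Hx0.
have [n Hn] := INR_archimed (/ 2) K (ltac:(lra)).
have Hn1 : (1 <= n)%N by case: n Hn => [|n] //= H; lra.
have H1 := Hlow n Hn1.
have [lst [Hl1 Hl2]] := Hcov (C * n)%N.
have H2 : (wf S nu (C * n) <= size lst)%N by apply: wf_le => g Hg; apply: Hl1; exact: word_ball_ball.
have H3 := INR_leq H2.
have E : x0 * INR (C * n) = INR n / 2 by rewrite INR_muln /x0; field; lra.
rewrite E in Hl2.
rewrite /expn_R in H1.
have E2 : exp (INR n) = exp (INR n / 2) * exp (INR n / 2) by rewrite -exp_plus; congr exp; field.
have H4 := exp_ineq1_le (INR n / 2).
have H5 := exp_pos (INR n / 2).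
have H6 : exp (INR n / 2) * exp (INR n / 2) <= K * exp (INR n / 2) by lra.
have H7 : exp (INR n / 2) <= K.
  apply: (Rmult_le_reg_r (exp (INR n / 2))) => //; lra.
have : INR n * / 2 = INR n / 2 by [].
lra.
Qed.
End FinalStep.

Theorem mainTheorem4 (d A : nat) (S : nat -> seq (tfun d))
  (l : nat -> tfun d -> nat) :
  (2 <= d)%N ->
  non_l1_expanding_similar_family S l ->
  (forall nu s, List.In s (S nu) -> incomp_inf S l nu s) ->
  (forall nu, (size (S nu) <= A)%N) ->
  (exists delta : nat -> nat,
     subexponential delta /\ ln_concave delta /\
     (forall N, exists nu, (N <= nu)%N /\
        forall n, card_le (fun g => incomp_inf S l nu g /\ sphere S l nu n g)
                          (delta n))) ->
  forall nu, subexponential_growth (S nu).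
Proof.
move=> Hd2 Hfam Hgen HA [delta [Hsub [Hlnc Hgood]]] nu.
have Hd : (0 < d)%N by apply: leq_trans Hd2.
have [Hdmono [Hup Hnboth]] := Hsub.
have Hns : ~ lesssim expn_R (fun n => INR (delta n)) by move=> H; apply: Hnboth.
have Hgood' : forall N, exists nu, (N <= nu)%N /\ good S l delta nu by exact: Hgood.
exists (wf S nu); split; first exact: wf_spec.
split; first exact: wf_mono.
split; first exact: wf_upper.
move=> [_ Hlow]; exact: (final_step Hd Hfam HA Hdmono (proj1 Hlnc) Hgood' Hns Hlow).
Qed.
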